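(* Let $\mathcal{A}=\langle Q,\{a,b\}\rangle$ be a synchronizing complete deterministic finite automaton with $|Q|=n$ states and two input letters $a,b$, and suppose that the letter $a$ is a simple idempotent. Then $\mathcal{A}$ has a reset word of length at most $(n-1)^2$, i.e., $\operatorname{rt}(\mathcal{A})\le (n-1)^2$.
   Context: A complete deterministic finite automaton (DFA) $\langle Q,\Sigma\rangle$ consists of a finite non-empty state set $Q$, a finite non-empty input alphabet $\Sigma$, and a transition function $Q\times\Sigma\to Q$, $(q,c)\mapsto q\cdot c$, extended to words by $q\cdot\varepsilon=q$ and $q\cdot(wc)=(q\cdot w)\cdot c$. For $P\subseteq Q$ and a word $w$, $P\cdot w=\{p\cdot w\mid p\in P\}$. A word $w\in\Sigma^*$ is a reset word if $|Q\cdot w|=1$; the DFA is synchronizing if it has a reset word, and its reset threshold $\operatorname{rt}(\mathcal{A})$ is the minimum length of a reset word. A letter $a$ is a simple idempotent if $|Q\setminus Q\cdot a|=1$ and $q\cdot a=q\cdot a^2$ for all $q\in Q$. *)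

(* Defs.v *)
From mathcomp Require Import all_boot.
Set Implicit Arguments. Unset Strict Implicit. Unset Printing Implicit Defensive.

Definition act (Q Sigma : Type) (delta : Q -> Sigma -> Q) (q : Q) (w : seq Sigma) : Q :=
  foldl delta q w.

Definition image_word (Q : finType) (Sigma : Type) (delta : Q -> Sigma -> Q)
  (P : {set Q}) (w : seq Sigma) : {set Q} :=
  [set act delta p w | p in P].

Definition is_reset_word (Q : finType) (Sigma : Type) (delta : Q -> Sigma -> Q)
  (w : seq Sigma) : Prop :=
  #|image_word delta [set: Q] w| = 1.

Definition synchronizing (Q : finType) (Sigma : Type) (delta : Q -> Sigma -> Q) : Prop :=
  exists w, is_reset_word delta w.

Definition simple_idempotent (Q : finType) (Sigma : Type) (delta : Q -> Sigma -> Q)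
  (a : Sigma) : Prop :=
  #|[set: Q] :\: image_word delta [set: Q] [:: a]| = 1 /\
  forall q : Q, delta q a = delta (delta q a) a.

(* Main.v *)
Require Import Defs.
From mathcomp Require Import all_boot.
From mathcomp Require Import zify.
From Stdlib Require Import Classical_Prop.
Set Implicit Arguments. Unset Strict Implicit. Unset Printing Implicit Defensive.

Section Auto.
Variables (Q Sigma : finType) (delta : Q -> Sigma -> Q) (a b : Sigma) (p : Q).
Hypothesis Hab : a != b.
Hypothesis Hab_all : forall c : Sigma, c = a \/ c = b.
Hypothesis Hnotp : forall q, delta q a != p.
Hypothesis Hfix : forall q, q != p -> delta q a = q.

Definition B x := delta x b.
Definition fb j := [set iter j B x | x : Q].

Lemma act_cons x c w : act delta x (c :: w) = act delta (delta x c) w.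
Proof. by []. Qed.

Lemma act_cat x w1 w2 : act delta x (w1 ++ w2) = act delta (act delta x w1) w2.
Proof. by rewrite /act foldl_cat. Qed.

Lemma act_nseq t x : act delta x (nseq t b) = iter t B x.
Proof. by elim: t x => [|t IH] x //; rewrite [nseq _ _]/= act_cons IH iterSr. Qed.

Lemma act_closed (X : Q -> Prop) :
  (forall x, X x -> X (delta x a)) -> (forall x, X x -> X (delta x b)) ->
  forall w x, X x -> X (act delta x w).
Proof.
move=> Ha Hb; elim=> [|c w IH] x Hx //.
rewrite act_cons; apply: IH; case: (Hab_all c) => ->; auto.
Qed.

Lemma L_fix w y : (forall k, iter k B y != p) -> act delta y w = iter (count_mem b w) B y.
Proof.
elim: w y => [|c w IH] y Hy //.
rewrite act_cons [count_mem _ _]/=; case: (Hab_all c) => ->.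
- rewrite Hfix; last by apply: (Hy 0).
  by rewrite (negbTE Hab) add0n IH.
- rewrite eqxx add1n IH ?iterSr //.
  by move=> k; rewrite -iterSr; apply: Hy.
Qed.

Lemma fbS j : fb j.+1 = B @: fb j.
Proof.
apply/setP => y; apply/imsetP/imsetP => [[x _ ->]|[z /imsetP [x _ ->] ->]].
- by exists (iter j B x); [apply: imset_f | rewrite iterS].
- by exists x => //; rewrite iterS.
Qed.

Lemma fbS_sub j : fb j.+1 \subset fb j.
Proof.
apply/subsetP => y /imsetP [x _ ->]; rewrite iterSr; exact: imset_f.
Qed.

Lemma fb_stable j : fb j.+1 = fb j -> forall k, fb (j + k) = fb j.
Proof.
move=> H; elim=> [|k IH]; first by rewrite addn0.
by rewrite addnS fbS IH -fbS H.
Qed.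

Lemma fb_card j : (forall i, i < j -> fb i.+1 != fb i) -> #|fb j| + j <= #|Q|.
Proof.
elim: j => [|j IH] H.
- by rewrite addn0 max_card.
- have H1 := IH (fun i Hi => H i (ltnW Hi)).
  have Hp : fb j.+1 \proper fb j by rewrite properEneq fbS_sub H.
  have := proper_card Hp. lia.
Qed.


Lemma stab_exists : exists d, fb d.+1 = fb d /\ #|fb d| + d <= #|Q|.
Proof.
have Hex : exists j, fb j.+1 == fb j.
  case: (boolP [exists j : 'I_#|Q|.+2, fb j.+1 == fb j]) => [/existsP [j Hj]|Hn].
  - by exists j.
  - exfalso.
    have := @fb_card #|Q|.+1 => H.
    suff: #|fb #|Q|.+1| + #|Q|.+1 <= #|Q| by lia.
    apply: H => i Hi; have Hi' : i < #|Q|.+2 by lia.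
    by move/existsPn: Hn => /(_ (Ordinal Hi')).
case: (ex_minnP Hex) => d /eqP Hd Hmin.
exists d; split => //; apply: fb_card => i Hi; apply/negP => /Hmin; lia.
Qed.

Variable d : nat.
Hypothesis Hst : fb d.+1 = fb d.
Hypothesis Hdm : #|fb d| + d <= #|Q|.
Notation P := (fb d).

Lemma fbP t : fb (d + t) = P.
Proof. exact: fb_stable. Qed.

Lemma inP t x : iter (d + t) B x \in P.
Proof. by rewrite -(fbP t); apply: imset_f. Qed.

Lemma inPd x : iter d B x \in P.
Proof. by have := inP 0 x; rewrite addn0. Qed.

Lemma iterP t x : x \in P -> iter t B x \in P.
Proof.
case/imsetP => z _ ->; rewrite -iterD addnC; exact: inP.
Qed.

Lemma surjP t u : u \in P -> exists2 x, x \in P & iter t B x = u.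
Proof.
move=> Hu; move: Hu; rewrite -{1}(fbP t) => /imsetP [z _ ->].
by exists (iter d B z); [exact: inPd | rewrite -iterD addnC].
Qed.

Lemma injP : {in P &, injective B}.
Proof.
apply/imset_injP; rewrite -fbS Hst //.
Qed.

Lemma injiter t : {in P &, injective (iter t B)}.
Proof.
elim: t => [|t IH] x y Hx Hy //= E.
apply: IH => //; apply: injP => //; exact: iterP.
Qed.


Variables (w0 : seq Sigma) (s : Q).
Hypothesis Hw0 : forall q, act delta q w0 = s.

Lemma reset_const (W : seq Sigma) z : (forall q, act delta q W = z) -> is_reset_word delta W.
Proof.
move=> H; rewrite /is_reset_word /image_word.
have -> : [set act delta p0 W | p0 in [set: Q]] = [set z].
  apply/setP => x; rewrite inE; apply/imsetP/eqP => [[q _ ->]|->]; first exact: H.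
  by exists z; rewrite ?inE ?H.
exact: cards1.
Qed.

Lemma caseA : p \notin P -> #|P| = 1.
Proof.
move=> HpP.
have Hne : forall x, x \in P -> forall k, iter k B x != p.
  move=> x Hx k; apply/eqP => E; move: (iterP k Hx); rewrite E => H; by rewrite H in HpP.
apply/eqP; rewrite eqn_leq; apply/andP; split.
- apply/card_le1_eqP => x y Hx Hy.
  apply: (injiter (t := count_mem b w0) Hy Hx).
  by rewrite -!L_fix ?Hw0 //; apply: Hne.
- by apply/card_gt0P; exists (iter d B p); exact: inPd.
Qed.

Lemma period_mul c k y : iter c B y = y -> iter (k * c) B y = y.
Proof. by move=> H; elim: k => [|k IH] //; rewrite mulSn iterD IH H. Qed.

Lemma period_mod c y t : iter c B y = y -> iter t B y = iter (t %% c) B y.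
Proof.
by move=> H; rewrite {1}(divn_eq t c) addnC iterD period_mul.
Qed.

Lemma iter_comm m1 m2 x : iter m1 B (iter m2 B x) = iter m2 B (iter m1 B x).
Proof. by rewrite -!iterD addnC. Qed.

Hypothesis HpP : p \in P.

Lemma pigeon : exists2 c, 0 < c <= #|P| & iter c B p = p.
Proof.
pose h (i : 'I_#|P|.+1) := iter i B p.
case: (boolP (injectiveb h)) => [/injectiveP Hinj|/injectivePn [i [j Hij Eij]]].
- exfalso.
  have : #|[set h i | i : 'I_#|P|.+1]| <= #|P|.
    apply: subset_leq_card; apply/subsetP => x /imsetP [i _ ->]; exact: iterP.
  by rewrite card_imset // card_ord ltnn.
- wlog Hlt : i j Hij Eij / i < j.
    move=> Hw; case: (ltngtP i j) => H; [exact: (Hw i j)|apply: (Hw j i) => //|].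
    by rewrite eq_sym. by move/val_inj: H => H; rewrite H eqxx in Hij.
  exists (j - i); first by apply/andP; split; [rewrite subn_gt0|have := ltn_ord j; lia].
  apply: (injiter (t := i) (iterP _ HpP) HpP).
  rewrite iter_comm -iterD subnK; last exact: ltnW.
  by move: Eij; rewrite /h => ->.
Qed.


Variable c : nat.
Hypothesis Hc0 : 0 < c.
Hypothesis HcP : c <= #|P|.
Hypothesis Hcp : iter c B p = p.
Notation r := (delta p a).

Lemma y0_period : iter c B (iter d B r) = iter d B r.
Proof.
have Hy0 := inPd r.
case: (Classical_Prop.classic (exists k, iter k B (iter d B r) = p)) => [[k Hk]|Hn].
- apply: (injiter (t := k) (iterP _ Hy0) Hy0).
  by rewrite iter_comm Hk Hcp.
- have Hne : forall k, iter k B (iter d B r) != p.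
    by move=> k; apply/eqP => E; apply: Hn; exists k.
  apply: iter_fix.
  have HB : B (iter d B r) \in P by apply: (iterP 1 Hy0).
  apply: (injiter (t := count_mem b w0) HB Hy0).
  rewrite -!L_fix ?Hw0 //.
  by move=> k; rewrite -iterSr; apply: Hne.
Qed.

Lemma r_period t : iter c B (iter (d + t) B r) = iter (d + t) B r.
Proof. by rewrite addnC iterD iter_comm y0_period. Qed.

Lemma s_orbit : exists k0, iter d B s = iter (d + k0) B r.
Proof.
rewrite -(Hw0 r).
apply: (act_closed (X := fun x => exists k0, iter d B x = iter (d + k0) B r)).
- move=> x [k Hk]; case: (eqVneq x p) => [->|Hxp]; first by exists 0; rewrite addn0.
  by rewrite Hfix //; exists k.
- move=> x [k Hk]; exists k.+1; rewrite addnS /= -Hk -iterS iterSr //.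
- by exists 0; rewrite addn0.
Qed.


Lemma step (U : {set Q}) : U \subset P -> U != P ->
  (exists k1, iter (d + k1) B r \in U) ->
  exists2 j, j < c & (iter (d + j) B r \in U) && (iter (d + j) B p \notin U).
Proof.
move=> HUP HneU [k1 Hk1].
case: (boolP [exists j : 'I_c, (iter (d + j) B r \in U) && (iter (d + j) B p \notin U)])
  => [/existsP [j Hj]|Hn]; first by exists j.
exfalso.
have H : forall j, iter (d + j) B r \in U -> iter (d + j) B p \in U.
  move=> j; have Hjc : j %% c < c by rewrite ltn_pmod.
  have E1 : iter (d + j) B r = iter (d + j %% c) B r.
    rewrite addnC iterD (period_mod j y0_period) -iterD addnC //.
  have E2 : iter (d + j) B p = iter (d + j %% c) B p.
    by rewrite !iterD (period_mod j Hcp).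
  rewrite E1 E2 => Hr.
  move/existsPn: Hn => /(_ (Ordinal Hjc)) /=.
  by rewrite Hr /= negbK.
have Hmono : forall w k x, iter (d + k) B (act delta x w) \in U ->
    iter (d + (k + count_mem b w)) B x \in U.
  elim=> [|e w IH] k x; first by rewrite addn0.
  rewrite act_cons [count_mem _ _]/= => /IH.
  case: (Hab_all e) => ->.
  - rewrite (negbTE Hab) add0n.
    case: (eqVneq x p) => [->|Hxp]; first exact: H.
    by rewrite Hfix.
  - rewrite eqxx => Hx.
    have -> : d + (k + (1 + count_mem b w)) = (d + (k + count_mem b w)).+1 by lia.
    by rewrite iterSr.
have [k0 Hk0] := s_orbit.
pose k := k1 + (c - 1) * k0.
have Hs : iter (d + k) B s \in U.
  rewrite addnC iterD Hk0 addnC iterD -iterD.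
  have -> : k + k0 = k1 + k0 * c.
    rewrite /k; nia.
  by rewrite iterD period_mul ?y0_period // -iterD addnC.
have Hall : forall x, iter (d + (k + count_mem b w0)) B x \in U.
  by move=> x; apply: Hmono; rewrite Hw0.
have : ~~ (P \subset U).
  by apply: contra HneU => HPU; rewrite eqEsubset HUP HPU.
case/subsetPn => u Hu HuU.
move: Hu; rewrite -(fbP (k + count_mem b w0)) => /imsetP [z _ Ez].
by rewrite Ez Hall in HuU.
Qed.


Lemma chain t : forall U : {set Q}, U \subset P ->
  (exists k, iter (d + k) B r \in U) -> #|P| - #|U| <= t ->
  exists V, size V <= t * #|Q| /\ forall x, x \in P -> act delta x V \in U.
Proof.
elim: t => [|t IH] U HUP HI Ht.
- exists [::]; split => // x Hx /=.
  have /eqP -> : U == P by rewrite eqEcard HUP /=; lia.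
  exact: Hx.
- case: (eqVneq U P) => [->|HneU]; first by exists [::].
  have [j Hj /andP [HrU HpU]] := step HUP HneU HI.
  pose e := d + j.
  pose Bl := a :: nseq e b.
  pose U' := [set x in P | act delta x Bl \in U].
  have HactBl : forall x, act delta x Bl = iter e B (delta x a).
    by move=> x; rewrite act_cons act_nseq.
  have HU'P : U' \subset P by apply/subsetP => x; rewrite inE => /andP [].
  have HpU' : p \in U' by rewrite inE HpP HactBl.
  pose W := [set x in P | iter e B x \in U].
  have HWU' : W \subset U'.
    apply/subsetP => x; rewrite !inE => /andP [HxP HxU].
    have Hxp : x != p by apply: contraNneq HpU => <-.
    by rewrite HxP HactBl Hfix.
  have HUW : #|U| <= #|W|.
    apply: (leq_trans _ (leq_imset_card (iter e B) W)).
    apply: subset_leq_card; apply/subsetP => u Hu.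
    have [x Hx Exu] := surjP e (subsetP HUP u Hu).
    by apply/imsetP; exists x => //; rewrite inE Hx Exu.
  have HpW : p \notin W by rewrite inE negb_and HpU orbT.
  have HcardU' : #|U| < #|U'|.
    have : p |: W \subset U' by rewrite subUset sub1set HpU' HWU'.
    move/subset_leq_card; rewrite cardsU1 HpW; lia.
  have HI' : exists k, iter (d + k) B r \in U'.
    exists (c * d - d).
    case: (eqVneq (iter (d + (c * d - d)) B r) p) => [->|Hxp] //.
    rewrite inE inP HactBl Hfix //.
    have -> : iter e B (iter (d + (c * d - d)) B r) = iter (e + (c * d - d)) B (iter d B r).
      by rewrite -!iterD; congr iter; lia.
    have -> : e + (c * d - d) = j + d * c by rewrite /e; nia.
    by rewrite iterD period_mul ?y0_period // -iterD addnC.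
  have [V' [HV'size HV']] := IH U' HU'P HI' (ltac:(lia)).
  exists (V' ++ Bl); split.
  + rewrite size_cat /Bl /= size_nseq.
    have : e < #|Q| by rewrite /e; lia.
    rewrite mulSn; move: HV'size; clear; set n := #|Q|; set sv := size V'; set tn := t * n; lia.
  + move=> x Hx; rewrite act_cat.
    by have := HV' x Hx; rewrite inE => /andP [].
Qed.


Lemma rp : r != p.
Proof. exact: Hnotp. Qed.

Lemma coreB : exists w, is_reset_word delta w /\ size w <= (#|Q| - 1) ^ 2.
Proof.
case: (ltnP #|P| #|Q|) => Hlt.
- pose U0 := [set iter d B r].
  have HU0P : U0 \subset P by rewrite sub1set inPd.
  have HI : exists k, iter (d + k) B r \in U0 by exists 0; rewrite addn0 set11.
  have Hle : #|P| - #|U0| <= #|P| - 1 by rewrite cards1.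
  have [V [HVs HV]] := chain HU0P HI Hle.
  exists (nseq d b ++ V); split.
  + apply: (reset_const (z := iter d B r)) => q.
    rewrite act_cat act_nseq; apply/set1P; apply: HV; exact: inPd.
  + rewrite size_cat size_nseq.
    move: HVs Hdm Hlt Hc0 HcP; clear; set n := #|Q|; set m := #|P|; set sv := size V.
    nia.
- have HPT : forall x, x \in P.
    have : P == [set: Q] by rewrite eqEcard subsetT cardsT.
    by move/eqP => -> x; rewrite inE.
  have Hd0 : d = 0 by move: Hdm Hlt; lia.
  pose U1 := [set p; r].
  have HU1P : U1 \subset P by apply/subsetP => x _; exact: HPT.
  have HI : exists k, iter (d + k) B r \in U1 by exists 0; rewrite Hd0 /= !inE eqxx orbT.
  have HU1c : #|U1| = 2 by rewrite cards2 eq_sym rp.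
  have Hn2 : 2 <= #|Q| by rewrite -HU1c max_card.
  have [V [HVs HV]] := chain HU1P HI (leqnn (#|P| - #|U1|)).
  exists (V ++ [:: a]); split.
  + apply: (reset_const (z := r)) => q.
    rewrite act_cat; have := HV q (HPT q); rewrite !inE => /orP [] /eqP -> //=.
    exact: Hfix rp.
  + rewrite size_cat /=.
    rewrite HU1c in HVs.
    move: HVs Hn2 Hlt; clear; set n := #|Q|; set m := #|P|; set sv := size V.
    move=> HVs Hn2 Hlt.
    have Hm : m = n by apply/eqP; rewrite eqn_leq Hlt max_card.
    rewrite Hm in HVs; nia.
Qed.

End Auto.

Theorem mainTheorem1 (Q Sigma : finType) (delta : Q -> Sigma -> Q) (a b : Sigma) (n : nat) :
  #|Q| = n ->
  a != b ->
  (forall c : Sigma, c = a \/ c = b) ->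
  synchronizing delta ->
  simple_idempotent delta a ->
  exists w : seq Sigma, is_reset_word delta w /\ size w <= (n - 1) ^ 2.
Proof.
move=> <- Hab Hall [w0 Hw0] [Hcard Hidem].
move/eqP: Hcard => /cards1P [p Hp].
have Himg : forall q, q \in image_word delta [set: Q] [:: a] = [exists q', delta q' a == q].
  move=> q; apply/imsetP/existsP => [[q' _ ->]|[q' /eqP <-]]; first by exists q'.
  by exists q'.
have Hnotp : forall q, delta q a != p.
  move=> q; apply/eqP => E.
  have : p \in [set p] by rewrite set11.
  rewrite -Hp !inE andbT Himg => /existsPn H.
  by move: (H q); rewrite E eqxx.
have Hfix : forall q, q != p -> delta q a = q.
  move=> q Hq.
  have : q \notin [set: Q] :\: image_word delta [set: Q] [:: a] by rewrite Hp inE.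
  rewrite !inE andbT negbK Himg => /existsP [q' /eqP <-].
  by rewrite -Hidem.
move/eqP: Hw0 => /cards1P [s Hs].
have Hw0s : forall q, act delta q w0 = s.
  move=> q; apply/set1P; rewrite -Hs; apply: imset_f; exact: in_setT.
have [d [Hst Hdm]] := stab_exists delta Hab.
case: (boolP (p \in fb delta b d)) => HpP.
- have [c /andP [Hc0 HcP] Hcp] := pigeon Hab Hst Hdm HpP.
  exact: (coreB Hab Hall Hnotp Hfix Hst Hdm Hw0s HpP Hc0 HcP Hcp).
- have H1 := caseA Hab Hall Hfix Hst Hw0s HpP.
  move/eqP: (H1) => /cards1P [z Hz].
  exists (nseq d b); split.
  + apply: (reset_const (z := z)) => q.
    rewrite act_nseq; apply/set1P; rewrite -Hz.
    exact: inPd.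
  + rewrite size_nseq; move: Hdm; rewrite H1; nia.
Qed.
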